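(* Let $p$ be a prime and $m\ge 2$ an integer. Let $W=\langle a_0\rangle\times\langle a_1\rangle\times\cdots\times\langle a_{p-1}\rangle$ be abelian with $a_0$ of order $p^m$ and $a_i$ of order $p^{m-1}$ for $1\le i\le p-1$, and let $\phi:W\to W$ be the map with $\phi(a_i)=a_ia_{i+1}$ for $0\le i\le p-2$ and $\phi(a_{p-1})=a_{p-1}\prod_{j=1}^{p-1}a_j^{-\binom{p}{j}}$. Then $\phi$ is an automorphism of $W$ of order $p$; in particular the semidirect product $W\rtimes\langle b_0\rangle$, with $b_0$ of order $p^{m-1}$ acting via $b_0^{-1}wb_0=\phi(w)$, is well-defined. *)

(* Defs.v *)
From mathcomp Require Export all_boot all_fingroup all_solvable.
Set Implicit Arguments.
Unset Strict Implicit.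
Unset Printing Implicit Defensive.

(* Main.v *)
Require Import Defs.
Import GroupScope.
Set Implicit Arguments.
Unset Strict Implicit.

Section Ab.
Variables (gT : finGroupType) (A : {group gT}).
Hypothesis cAA : abelian A.

Lemma ab_comm x y : x \in A -> y \in A -> commute x y.
Proof. by move=> xA yA; apply: (centsP cAA) => //. Qed.

Lemma group_prod_in (I : eqType) r (P : pred I) (F : I -> gT) :
  (forall i, i \in r -> P i -> F i \in A) -> \prod_(i <- r | P i) F i \in A.
Proof.
elim: r => [|j r IH] FA; first by rewrite big_nil group1.
have FA' : forall i, i \in r -> P i -> F i \in A.
  by move=> i ir; apply: FA; rewrite inE ir orbT.
rewrite big_cons; case: ifP => Pj; last exact: IH.
by rewrite groupM ?(IH FA') // (FA _ (mem_head _ _) Pj).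
Qed.

Lemma prodgM_ab (I : eqType) r (P : pred I) (F G : I -> gT) :
  (forall i, i \in r -> P i -> F i \in A) -> (forall i, i \in r -> P i -> G i \in A) ->
  \prod_(i <- r | P i) (F i * G i) = \prod_(i <- r | P i) F i * \prod_(i <- r | P i) G i.
Proof.
elim: r => [|j r IH] FA GA; first by rewrite !big_nil mulg1.
have FA' : forall i, i \in r -> P i -> F i \in A.
  by move=> i ir; apply: FA; rewrite inE ir orbT.
have GA' : forall i, i \in r -> P i -> G i \in A.
  by move=> i ir; apply: GA; rewrite inE ir orbT.
rewrite !big_cons; case: ifP => Pj; last exact: IH.
rewrite IH // !mulgA; congr (_ * _); rewrite -!mulgA; congr (_ * _).
by apply: ab_comm; [exact: GA (mem_head _ _) Pj | exact: group_prod_in].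
Qed.

Lemma prodgV_ab (I : eqType) r (P : pred I) (F : I -> gT) :
  (forall i, i \in r -> P i -> F i \in A) ->
  \prod_(i <- r | P i) (F i)^-1 = (\prod_(i <- r | P i) F i)^-1.
Proof.
elim: r => [|j r IH] FA; first by rewrite !big_nil invg1.
have FA' : forall i, i \in r -> P i -> F i \in A.
  by move=> i ir; apply: FA; rewrite inE ir orbT.
rewrite !big_cons; case: ifP => Pj; last exact: IH.
rewrite IH // invMg; apply: ab_comm; rewrite groupV //;
  [exact: FA (mem_head _ _) Pj | exact: group_prod_in].
Qed.

Lemma prodgX_ab (I : eqType) r (P : pred I) (F : I -> gT) n :
  (forall i, i \in r -> P i -> F i \in A) ->
  (\prod_(i <- r | P i) F i) ^+ n = \prod_(i <- r | P i) (F i) ^+ n.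
Proof.
elim: r => [|j r IH] FA; first by rewrite !big_nil expg1n.
have FA' : forall i, i \in r -> P i -> F i \in A.
  by move=> i ir; apply: FA; rewrite inE ir orbT.
rewrite !big_cons; case: ifP => Pj; last exact: IH.
rewrite expgMn ?IH //; apply: ab_comm; [exact: FA (mem_head _ _) Pj | exact: group_prod_in].
Qed.

Lemma ext_morph (a b : nat -> gT) : (forall i, b i \in A) ->
  forall n (G : {group gT}),
  \big[dprod/1]_(0 <= i < n) <[a i]> = G -> (forall i, i < n -> #[b i] %| #[a i]) ->
  exists f : {morphism G >-> gT},
    [/\ forall i, i < n -> f (a i) = b i, f @* G \subset A
      & forall i, i < n -> a i \in G].
Proof.
move=> bA; elim=> [|n IH] G.
  rewrite big_geq // => defG _; exists (@triv_morph _ gT G); split => //.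
  by rewrite morphim_trivm sub1G.
rewrite big_nat_recr //= => defG dv.
have [[K H defK defH] _ _ _] := dprodP defG.
have [fK [fKv fKA aK]] := IH K defK (fun i lt => dv i (ltnW lt)).
rewrite defK in defG.
set fH := eltm_morphism (dv n (ltnSn n)).
have fHA : fH @* <[a n]> \subset A.
  by rewrite morphim_cycle ?cycle_id //= eltm_id cycle_subG.
have cf : fH @* <[a n]> \subset 'C(fK @* K) by apply: (sub_abelian_cent2 cAA).
exists (dprodm defG cf); split.
- move=> i; rewrite ltnS leq_eqVlt => /orP[/eqP-> | lt].
    by rewrite /=; rewrite dprodmEr ?cycle_id //= eltm_id.
  by rewrite /= dprodmEl ?aK // fKv.
- by rewrite im_dprodm mul_subG.
- have [_ defKH _ _] := dprodP defG; rewrite -defKH.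
  move=> i; rewrite ltnS leq_eqVlt => /orP[/eqP-> | lt].
    by rewrite -[X in X \in _]mul1g mem_mulg ?group1 ?cycle_id.
  by rewrite -[X in X \in _]mulg1 mem_mulg ?group1 ?aK.
Qed.
End Ab.
Lemma morph_prod_in (aT rT : finGroupType) (D : {group aT}) (f : {morphism D >-> rT})
  (I : eqType) r (P : pred I) (F : I -> aT) :
  (forall i, i \in r -> P i -> F i \in D) ->
  f (\prod_(i <- r | P i) F i) = \prod_(i <- r | P i) f (F i).
Proof.
elim: r => [|j r IH] FD; first by rewrite !big_nil morph1.
have FD' : forall i, i \in r -> P i -> F i \in D.
  by move=> i ir; apply: FD; rewrite inE ir orbT.
rewrite !big_cons; case: ifP => Pj; last exact: IH.
rewrite morphM ?IH ?FD ?mem_head //.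
exact: group_prod_in.
Qed.

Theorem mainTheorem14 (gT : finGroupType) (W : {group gT}) (a : nat -> gT)
    (p m : nat) :
  prime p -> 2 <= m ->
  \big[dprod/1]_(i < p) <[a i]> = W ->
  abelian W ->
  #[a 0] = (p ^ m)%N ->
  (forall i, 1 <= i < p -> #[a i] = (p ^ m.-1)%N) ->
  exists2 phi : {perm gT}, phi \in Aut W &
    [/\ forall i, i.+1 < p -> phi (a i) = a i * a i.+1,
        phi (a p.-1) = a p.-1 * \prod_(1 <= j < p) (a j) ^- 'C(p, j),
        #[phi] = p
      & phi ^+ (p ^ m.-1)%N = 1].
Proof.
move=> pr_p m2 defW cWW o0 oi.
have p1 := prime_gt1 pr_p.
case: p pr_p p1 defW o0 oi => [//|k] pr_p k1 defW o0 oi /=.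
rewrite ltnS in k1.
set Q := \prod_(1 <= j < k.+1) (a j) ^- 'C(k.+1, j).
have defW' : \big[dprod/1]_(0 <= i < k.+1) <[a i]> = W by rewrite big_mkord.
have dv1 : forall i, i < k.+1 -> #[(1:gT)] %| #[a i] by move=> i _; rewrite order1 dvd1n.
have [f0 [_ _ aW]] := @ext_morph _ W cWW a (fun _ => 1) (fun _ => group1 W) _ _ defW' dv1.
clear f0 dv1.
have QW : Q \in W.
  by apply: group_prod_in => j; rewrite mem_index_iota => /andP[_ jk] _; rewrite groupV groupX ?aW.
pose b i := if i.+1 < k.+1 then a i * a i.+1 else if i == k then a k * Q else 1.
have bW : forall i, b i \in W.
  move=> i; rewrite /b; case: ifP => [lt|_]; first by rewrite groupM ?aW // ltnW.
  by case: ifP => // _; rewrite groupM ?aW.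
set T := (k.+1 ^ m.-1)%N.
have aT : forall j, 0 < j < k.+1 -> a j ^+ T = 1.
  by move=> j jr; rewrite /T -(oi j jr) expg_order.
have QT : Q ^+ T = 1.
  rewrite (prodgX_ab cWW); last first.
    by move=> j; rewrite mem_index_iota => /andP[_ jk] _; rewrite groupV groupX ?aW.
  apply: big1_seq => j /andP[_]; rewrite mem_index_iota => jr.
  by rewrite expVgn -expgM mulnC expgM aT // expg1n invg1.
have dvb : forall i, i < k.+1 -> #[b i] %| #[a i].
  move=> [_|i ilt].
    rewrite /b ifT // o0 order_dvdn expgMn; last by apply: (ab_comm cWW); rewrite aW.
    rewrite -{1}o0 expg_order mul1g.
    have -> : (k.+1 ^ m)%N = (T * k.+1)%N by rewrite -expnSr prednK // ltnW.
    by rewrite expgM aT ?expg1n.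
  rewrite oi // order_dvdn /b; case: ifP => [lt|_].
    rewrite expgMn; last by apply: (ab_comm cWW); rewrite aW // ltnW.
    by rewrite !aT ?mulg1 // ltnW.
  case: ifP => [_|_]; last by rewrite expg1n.
  rewrite expgMn; last by apply: (ab_comm cWW); rewrite ?aW.
  by rewrite QT aT ?mulg1 // k1 /=.
have [f [fv fW _]] := ext_morph cWW bW defW' dvb.
have fWx : forall x, x \in W -> f x \in W.
  by move=> x xW; apply: (subsetP fW); apply: mem_morphim.
have iW : forall n x, x \in W -> iter n f x \in W.
  by elim=> // n IH x xW; rewrite iterS fWx ?IH.
have iM : forall n, {in W &, {morph iter n f : x y / x * y}}.
  by elim=> // n IH x y xW yW; rewrite !iterS IH // morphM ?iW.
pose h := iter k.+1 f.
have hM : morphic W h by apply/morphicP; exact: iM.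
pose hm := morphm_morphism hM.
have fa : forall i, i.+1 < k.+1 -> f (a i) = a i * a i.+1.
  by move=> i lt; rewrite fv ?(ltnW lt) // /b lt.
have fak : f (a k) = a k * Q by rewrite fv // /b ltnn eqxx.
have pasc : forall n, n < k.+1 ->
    \prod_(0 <= j < n.+1) a j ^+ 'C(n.+1, j) =
    \prod_(0 <= j < n.+1) a j ^+ 'C(n, j) * \prod_(0 <= j < n) a j.+1 ^+ 'C(n, j).
  move=> n nk.
  rewrite !big_nat_recl // !bin0 !expg1 -mulgA; congr (_ * _).
  rewrite -(prodgM_ab cWW).
  - by apply: eq_bigr => j _; rewrite binS expgD.
  - move=> j; rewrite mem_index_iota => /andP[_ jn] _.
    by rewrite groupX // aW // (leq_ltn_trans jn nk).
  - move=> j; rewrite mem_index_iota => /andP[_ jn] _.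
    by rewrite groupX // aW // (leq_ltn_trans jn nk).
have fprod : forall n (c : nat -> nat), n < k.+1 ->
    \prod_(0 <= j < n) f (a j ^+ c j) =
    \prod_(0 <= j < n) (a j ^+ c j * a j.+1 ^+ c j).
  move=> n c nk; apply: eq_big_nat => j /andP[_ jn].
  have jk : j.+1 < k.+1 by apply: leq_ltn_trans jn nk.
  rewrite morphX ?aW ?(ltnW jk) // fa // expgMn //.
  by apply: (ab_comm cWW); rewrite aW // ltnW.
have memr : forall n (c : nat -> nat) j, n <= k.+1 -> j \in index_iota 0 n -> true -> a j ^+ c j \in W.
  by move=> n c j nk; rewrite mem_index_iota => /andP[_ jn] _; rewrite groupX // aW // (leq_trans jn nk).
have memr1 : forall n (c : nat -> nat) j, n < k.+1 -> j \in index_iota 0 n -> true -> a j.+1 ^+ c j \in W.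
  by move=> n c j nk; rewrite mem_index_iota => /andP[_ jn] _; rewrite groupX // aW // (leq_ltn_trans jn nk).
have E1 : forall n, n < k.+1 -> iter n f (a 0) = \prod_(0 <= j < n.+1) a j ^+ 'C(n, j).
  elim=> [_|n IH nk]; first by rewrite big_nat1 expg1.
  rewrite iterS (IH (ltnW nk)) (morph_prod_in f); last by move=> j; apply: (memr _ (fun j => 'C(n, j)) j (ltnW nk)).
  rewrite fprod // (prodgM_ab cWW); last 2 first.
  - by move=> j; apply: (memr _ (fun j => 'C(n, j)) j (ltnW nk)).
  - by move=> j; apply: (memr1 _ (fun j => 'C(n, j)) j nk).
  rewrite [in X in _ * X = _]big_nat_recr //= binn expg1 mulgA -(pasc n (ltnW nk)).
  by rewrite [RHS]big_nat_recr //= binn expg1.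
have E2 : h (a 0) = a 0.
  rewrite /h iterS E1 // big_nat_recr //= binn expg1.
  rewrite morphM ?aW //; last by apply: group_prod_in => j; apply: (memr _ (fun j => 'C(k, j)) j (ltnW (ltnSn k))).
  rewrite fak (morph_prod_in f); last by move=> j; apply: (memr _ (fun j => 'C(k, j)) j (ltnW (ltnSn k))).
  rewrite fprod // (prodgM_ab cWW); last 2 first.
  - by move=> j; apply: (memr _ (fun j => 'C(k, j)) j (ltnW (ltnSn k))).
  - by move=> j; apply: (memr1 _ (fun j => 'C(k, j)) j (ltnSn k)).
  set X := \prod_(0 <= j < k) a j ^+ 'C(k, j).
  set Y := \prod_(0 <= j < k) a j.+1 ^+ 'C(k, j).
  have P := pasc k (ltnSn k); rewrite [X in _ = X * _]big_nat_recr //= binn expg1 -/X -/Y in P.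
  have YW : Y \in W by apply: group_prod_in => j; apply: (memr1 _ (fun j => 'C(k, j)) j (ltnSn k)).
  rewrite mulgA -(mulgA X) (ab_comm cWW YW (aW k (ltnSn k))) mulgA -P.
  rewrite big_nat_recl // bin0 expg1 /Q big_add1 /= (prodgV_ab cWW); last first.
    by move=> j; apply: (memr1 _ (fun j => 'C(k.+1, j.+1)) j (ltnSn k)).
  by rewrite -mulgA mulgV mulg1.
have hE : forall x, hm x = h x by [].
have hf : forall x, h (f x) = f (h x) by move=> x; rewrite /h -iterSr.
have E3 : forall i, i < k.+1 -> h (a i) = a i.
  elim=> [_|i IH ik]; first exact: E2.
  have ai : a i.+1 = (a i)^-1 * f (a i) by rewrite fa // mulKg.
  rewrite {1}ai -hE morphM ?groupV ?fWx ?aW ?(ltnW ik) // morphV ?aW ?(ltnW ik) //.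
  by rewrite !hE hf IH // ltnW.
have E4 : forall x, x \in W -> h x = x.
  move=> x xW; have [c [cP -> _]] := mem_bigdprod defW xW.
  rewrite -hE morph_prod; last first.
    by move=> i _; apply: (subsetP _ _ (cP i isT)); rewrite cycle_subG aW.
  apply: eq_bigr => i _; have /cycleP[e ->] := cP i isT.
  by rewrite morphX ?aW // hE E3.
have injf : 'injm f.
  apply/injmP => x y xW yW fxy.
  by rewrite -(E4 x xW) -(E4 y yW) /h !iterSr fxy.
have fWW : f @* W = W by apply/(morphim_fixP injf).
exists (aut injf fWW); first exact: Aut_aut.
have phiE := autE injf fWW.
have iphi : forall n x, x \in W -> iter n (aut injf fWW) x = iter n f x.
  by elim=> // n IH x xW; rewrite !iterS IH // phiE ?iW.
have phip : aut injf fWW ^+ k.+1 = 1.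
  apply/permP => x; rewrite perm1; case: (boolP (x \in W)) => xW.
    by rewrite permX iphi //; exact: E4.
  by rewrite permX_fix ?(out_Aut (Aut_aut injf fWW)).
have m1 : 0 < m.-1 by rewrite -ltnS prednK // ltnW.
split.
- by move=> i lt; rewrite phiE ?aW ?fa // ltnW.
- by rewrite phiE ?aW // fak.
- have : #[aut injf fWW] %| k.+1 by rewrite order_dvdn phip.
  case/primeP: pr_p => _ dvp /dvp /orP[|/eqP //].
  rewrite order_eq1 => /eqP e1.
  have := phiE (a 0) (aW 0 isT); rewrite e1 perm1 fa //.
  move/(congr1 (mulg (a 0)^-1)); rewrite mulKg mulVg => a1.
  have := oi 1%N k1; rewrite -a1 order1 => /esym/eqP.
  by rewrite -[X in _ == X](expn0 k.+1) eqn_exp2l // => /eqP e; rewrite e in m1.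
- by rewrite /T -(prednK m1) expnS expgM phip expg1n.
Qed.
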